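(* Let $b_1,b_2,b_3\in\mathbb{R}$ with $b_1b_2b_3\neq0$ and $b_2b_3<0$, and consider the system $$\dot x_1=b_1x_2,\qquad \dot x_2=b_2x_1x_3,\qquad \dot x_3=b_3x_1x_2 .$$ Then for every $m\in\mathbb{R}\setminus\{0\}$ the equilibrium state $e_1^m=(m,0,0)$ is nonlinear stable.
   Context: Nonlinear stable means stable in the sense of Lyapunov: for every neighbourhood $U$ of the equilibrium there is a neighbourhood $V$ such that every trajectory starting in $V$ remains in $U$ for all $t\ge0$. *)

(* Defs.v *)
From Stdlib Require Import Reals.
Open Scope R_scope.

Definition dist3 (p q : R * R * R) : R :=
  let '(p1, p2, p3) := p in
  let '(q1, q2, q3) := q in
  sqrt ((p1 - q1)^2 + (p2 - q2)^2 + (p3 - q3)^2).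

Definition right_cont0 (f : R -> R) : Prop :=
  forall eps, 0 < eps -> exists d, 0 < d /\
    forall t, 0 < t < d -> Rabs (f t - f 0) < eps.

Definition is_solution (b1 b2 b3 T : R) (x1 x2 x3 : R -> R) : Prop :=
  (forall t, 0 < t < T ->
      derivable_pt_lim x1 t (b1 * x2 t) /\
      derivable_pt_lim x2 t (b2 * x1 t * x3 t) /\
      derivable_pt_lim x3 t (b3 * x1 t * x2 t)) /\
  right_cont0 x1 /\ right_cont0 x2 /\ right_cont0 x3.

(* Lyapunov (nonlinear) stability of the equilibrium e: for every
   eps-ball U around e there is a delta-ball V such that every trajectory
   starting in V stays in U for all t >= 0 (for as long as it exists;
   a trajectory on [0,+oo) restricts to every [0,T)). *)
Definition nonlinear_stable (b1 b2 b3 : R) (e : R * R * R) : Prop :=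
  forall eps, 0 < eps -> exists delta, 0 < delta /\
    forall (T : R) (x1 x2 x3 : R -> R),
      is_solution b1 b2 b3 T x1 x2 x3 ->
      dist3 (x1 0, x2 0, x3 0) e < delta ->
      forall t, 0 <= t < T -> dist3 (x1 t, x2 t, x3 t) e < eps.

(* Main.v *)
Require Import Defs.
From Stdlib Require Import Reals Lra Psatz Ranalysis5.
Open Scope R_scope.

Lemma cons_lem (F : R -> R) u t : u <= t ->
  (forall v, u <= v <= t -> derivable_pt_lim F v 0) -> F t = F u.
Proof.
  intros Hut HF. destruct (Req_dec u t) as [->|Hne]; [reflexivity|].
  destruct (MVT_cor2 F (fun _ => 0) u t) as [c [Hc _]]; [lra| exact HF |]. lra.
Qed.

Lemma sq_abs x r : 0 <= r -> x^2 <= r^2 -> Rabs x <= r.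
Proof. intros Hr H. unfold Rabs; destruct (Rcase_abs x); nra. Qed.

Lemma sq_abs_lt x r : 0 <= r -> x^2 < r^2 -> Rabs x < r.
Proof. intros Hr H. unfold Rabs; destruct (Rcase_abs x); nra. Qed.

Lemma deriv_h b1 b2 b3 T x1 x2 x3 v :
  is_solution b1 b2 b3 T x1 x2 x3 -> 0 < v < T ->
  derivable_pt_lim (fun y => b3^2 * (x2 y * x2 y) + (-(b2*b3)) * (x3 y * x3 y)) v 0.
Proof.
  intros [Hs _] Hv. destruct (Hs v Hv) as [d1 [d2 d3]].
  pose proof (derivable_pt_lim_plus _ _ v _ _
    (derivable_pt_lim_scal _ (b3^2) v _ (derivable_pt_lim_mult _ _ v _ _ d2 d2))
    (derivable_pt_lim_scal _ (-(b2*b3)) v _ (derivable_pt_lim_mult _ _ v _ _ d3 d3))) as H.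
  match type of H with derivable_pt_lim _ _ ?l => replace 0 with l by ring end.
  exact H.
Qed.

Lemma deriv_g b1 b2 b3 T x1 x2 x3 v :
  is_solution b1 b2 b3 T x1 x2 x3 -> 0 < v < T ->
  derivable_pt_lim (fun y => b3 * (x1 y * x1 y) - 2 * b1 * x3 y) v 0.
Proof.
  intros [Hs _] Hv. destruct (Hs v Hv) as [d1 [d2 d3]].
  pose proof (derivable_pt_lim_minus _ _ v _ _
    (derivable_pt_lim_scal _ b3 v _ (derivable_pt_lim_mult _ _ v _ _ d1 d1))
    (derivable_pt_lim_scal _ (2*b1) v _ d3)) as H.
  match type of H with derivable_pt_lim _ _ ?l => replace 0 with l by ring end.
  exact H.
Qed.

Definition cK b2 b3 := (b3^2 + -(b2*b3)) / b3^2 + (b3^2 + -(b2*b3)) / (-(b2*b3)).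
Definition cL b2 b3 := cK b2 b3 + 1.
Definition cM b1 b2 b3 m := 3 * Rabs m + Rabs (2*b1/b3) * (cL b2 b3 + 1).

Lemma cK_pos b2 b3 : b3 <> 0 -> b2 * b3 < 0 -> 0 < cK b2 b3.
Proof.
  intros H1 H2. unfold cK.
  assert (0 < b3^2) by (simpl; nra).
  assert (0 < (b3^2 + -(b2*b3)) / b3^2) by (apply Rdiv_lt_0_compat; lra).
  assert (0 < (b3^2 + -(b2*b3)) / (-(b2*b3))) by (apply Rdiv_lt_0_compat; lra).
  lra.
Qed.

Lemma bounds b1 b2 b3 T x1 x2 x3 m d u v :
  b3 <> 0 -> b2 * b3 < 0 -> is_solution b1 b2 b3 T x1 x2 x3 ->
  0 < u <= v -> v < T -> 0 < d -> d <= Rabs m / 2 ->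
  Rabs (x1 u - m) < d -> Rabs (x2 u) < d -> Rabs (x3 u) < d ->
  x2 v ^ 2 <= (cL b2 b3 * d)^2 /\ x3 v ^ 2 <= (cL b2 b3 * d)^2 /\
  Rabs (x1 v ^ 2 - m ^ 2) <= cM b1 b2 b3 m * d.
Proof.
  intros Hb3 Hbb sol Hu HvT Hd Hdm H1 H2 H3.
  set (A := b3^2). set (B := -(b2*b3)).
  assert (HA : 0 < A) by (unfold A; simpl; nra).
  assert (HB : 0 < B) by (unfold B; lra).
  pose proof (cK_pos b2 b3 Hb3 Hbb) as HK.
  assert (Hh : A * (x2 v * x2 v) + B * (x3 v * x3 v) = A * (x2 u * x2 u) + B * (x3 u * x3 u)).
  { apply (cons_lem (fun y => A * (x2 y * x2 y) + B * (x3 y * x3 y))); [lra|].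
    intros w Hw. apply (deriv_h b1 b2 b3 T x1 x2 x3 w sol). lra. }
  assert (Hg : b3 * (x1 v * x1 v) - 2 * b1 * x3 v = b3 * (x1 u * x1 u) - 2 * b1 * x3 u).
  { apply (cons_lem (fun y => b3 * (x1 y * x1 y) - 2 * b1 * x3 y)); [lra|].
    intros w Hw. apply (deriv_g b1 b2 b3 T x1 x2 x3 w sol). lra. }
  assert (Hu2 : x2 u ^2 < d^2) by (apply Rabs_def2 in H2; nra).
  assert (Hu3 : x3 u ^2 < d^2) by (apply Rabs_def2 in H3; nra).
  assert (Hhu : A * (x2 u * x2 u) + B * (x3 u * x3 u) <= (A + B) * d^2) by nra.
  assert (EKA : (A + B) / A * A = A + B) by (field; lra).
  assert (EKB : (A + B) / B * B = A + B) by (field; lra).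
  assert (HKdef : cK b2 b3 = (A+B)/A + (A+B)/B) by reflexivity.
  assert (HLdef : cL b2 b3 = cK b2 b3 + 1) by reflexivity.
  assert (HKA : 0 < (A+B)/A) by (apply Rdiv_lt_0_compat; lra).
  assert (HKB : 0 < (A+B)/B) by (apply Rdiv_lt_0_compat; lra).
  assert (HL2 : cK b2 b3 <= (cL b2 b3)^2) by (rewrite HLdef; nra).
  assert (Hv2 : x2 v ^ 2 <= cK b2 b3 * d^2).
  { rewrite HKdef. assert (A * x2 v ^ 2 <= (A+B) * d^2) by nra.
    assert (x2 v ^ 2 <= (A+B)/A * d^2).
    { apply (Rmult_le_reg_l A); [lra|]. nra. }
    nra. }
  assert (Hv3 : x3 v ^ 2 <= cK b2 b3 * d^2).
  { rewrite HKdef. assert (B * x3 v ^ 2 <= (A+B) * d^2) by nra.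
    assert (x3 v ^ 2 <= (A+B)/B * d^2).
    { apply (Rmult_le_reg_l B); [lra|]. nra. }
    nra. }
  assert (HLd2 : cK b2 b3 * d^2 <= (cL b2 b3 * d)^2) by nra.
  split; [lra|]. split; [lra|].
  assert (HL0 : 0 < cL b2 b3) by (rewrite HLdef; lra).
  assert (Ha3 : Rabs (x3 v) <= cL b2 b3 * d) by (apply sq_abs; nra).
  assert (E1 : x1 v ^ 2 - x1 u ^ 2 = 2 * b1 / b3 * (x3 v - x3 u)).
  { field_simplify_eq; [|exact Hb3]. nra. }
  assert (B1 : Rabs (x1 v ^ 2 - x1 u ^ 2) <= Rabs (2 * b1 / b3) * (cL b2 b3 * d + d)).
  { rewrite E1, Rabs_mult. apply Rmult_le_compat_l; [apply Rabs_pos|].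
    unfold Rminus. eapply Rle_trans; [apply Rabs_triang|]. rewrite Rabs_Ropp. lra. }
  assert (E2 : x1 u ^ 2 - m ^ 2 = (x1 u - m) * (x1 u - m + 2 * m)) by ring.
  assert (B2 : Rabs (x1 u ^ 2 - m ^ 2) <= 3 * Rabs m * d).
  { rewrite E2, Rabs_mult.
    assert (Rabs (x1 u - m + 2 * m) <= d + 2 * Rabs m).
    { eapply Rle_trans; [apply Rabs_triang|]. rewrite Rabs_mult, (Rabs_right 2) by lra. lra. }
    pose proof (Rabs_pos (x1 u - m)). pose proof (Rabs_pos (x1 u - m + 2*m)). nra. }
  unfold cM.
  replace (x1 v ^ 2 - m ^ 2) with ((x1 v ^ 2 - x1 u ^ 2) + (x1 u ^ 2 - m ^ 2)) by ring.
  eapply Rle_trans; [apply Rabs_triang|]. lra.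
Qed.

Lemma dist_lt a1 a2 a3 m r : dist3 (a1, a2, a3) (m, 0, 0) < r ->
  (a1 - m)^2 + a2^2 + a3^2 < r^2.
Proof.
  unfold dist3; cbn -[sqrt pow]. intros H.
  assert (Hs : 0 <= (a1 - m) ^ 2 + (a2 - 0) ^ 2 + (a3 - 0) ^ 2) by (repeat apply Rplus_le_le_0_compat; apply pow2_ge_0).
  pose proof (sqrt_sqrt _ Hs). pose proof (sqrt_pos ((a1 - m) ^ 2 + (a2 - 0) ^ 2 + (a3 - 0) ^ 2)).
  replace (a2 - 0) with a2 in * by ring. replace (a3 - 0) with a3 in * by ring. nra.
Qed.

Lemma dist_gt a1 a2 a3 m r : 0 < r -> (a1 - m)^2 + a2^2 + a3^2 < r^2 ->
  dist3 (a1, a2, a3) (m, 0, 0) < r.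
Proof.
  unfold dist3; cbn -[sqrt pow]. intros Hr H.
  replace (a2 - 0) with a2 by ring. replace (a3 - 0) with a3 by ring.
  rewrite <- (sqrt_pow2 r) by lra. apply sqrt_lt_1; [repeat apply Rplus_le_le_0_compat; apply pow2_ge_0|apply pow2_ge_0|exact H].
Qed.

Lemma x1_cont b1 b2 b3 T x1 x2 x3 v : is_solution b1 b2 b3 T x1 x2 x3 -> 0 < v < T ->
  continuity_pt x1 v.
Proof.
  intros [Hs _] Hv. destruct (Hs v Hv) as [d1 _].
  apply derivable_continuous_pt. exact (exist _ _ d1).
Qed.

Theorem proposition4p2 (b1 b2 b3 : R) :
  b1 * b2 * b3 <> 0 -> b2 * b3 < 0 ->
  forall m : R, m <> 0 -> nonlinear_stable b1 b2 b3 (m, 0, 0).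
Proof.
  intros Hb Hbb m Hm eps Heps.
  assert (Hb3 : b3 <> 0) by (intro; subst; apply Hb; ring).
  pose proof (cK_pos b2 b3 Hb3 Hbb) as HK.
  set (L := cL b2 b3). set (M := cM b1 b2 b3 m).
  assert (HL : 0 < L) by (unfold L, cL; lra).
  assert (Hma : 0 < Rabs m) by (apply Rabs_pos_lt; exact Hm).
  assert (HM : 0 < M) by (unfold M, cM; fold L; pose proof (Rabs_pos (2*b1/b3)); assert (0 <= Rabs (2*b1/b3) * (L+1)) by (apply Rmult_le_pos; lra); lra).
  set (d := Rmin eps (Rmin (Rabs m / 2) (Rmin (m^2 / (2*M)) (Rmin (eps * Rabs m / (2*M)) (eps / (2*L)))))).
  assert (Hm2 : 0 < m^2) by (simpl; nra).
  assert (Hd : 0 < d).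
  { unfold d. repeat apply Rmin_glb_lt; try lra;
    apply Rdiv_lt_0_compat; nra. }
  assert (Hd1 : d <= eps) by (unfold d; apply Rmin_l).
  assert (Hd2 : d <= Rabs m / 2) by (unfold d; eapply Rle_trans; [apply Rmin_r|apply Rmin_l]).
  assert (Hd3 : d <= m^2/(2*M)) by (unfold d; do 2 (eapply Rle_trans; [apply Rmin_r|]); apply Rmin_l).
  assert (Hd4 : d <= eps * Rabs m/(2*M)) by (unfold d; do 3 (eapply Rle_trans; [apply Rmin_r|]); apply Rmin_l).
  assert (Hd5 : d <= eps/(2*L)) by (unfold d; do 4 (eapply Rle_trans; [apply Rmin_r|]); apply Rle_refl).
  assert (HMd : M * d <= m^2/2).
  { apply (Rmult_le_compat_l M) in Hd3; [|lra]. replace (M * (m^2/(2*M))) with (m^2/2) in Hd3 by (field; lra). exact Hd3. }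
  assert (HMd' : M * d <= eps * Rabs m / 2).
  { apply (Rmult_le_compat_l M) in Hd4; [|lra]. replace (M * (eps * Rabs m/(2*M))) with (eps * Rabs m/2) in Hd4 by (field; lra). exact Hd4. }
  assert (HLd : L * d <= eps / 2).
  { apply (Rmult_le_compat_l L) in Hd5; [|lra]. replace (L * (eps/(2*L))) with (eps/2) in Hd5 by (field; lra). exact Hd5. }
  exists d. split; [exact Hd|].
  intros T x1 x2 x3 sol Hdist t [Ht0 HtT].
  destruct (Req_dec t 0) as [->|Htne]; [eapply Rlt_le_trans; eassumption|].
  apply dist_lt in Hdist.
  pose proof (pow2_ge_0 (x1 0 - m)). pose proof (pow2_ge_0 (x2 0)). pose proof (pow2_ge_0 (x3 0)).
  assert (Hc1 : Rabs (x1 0 - m) < d) by (apply sq_abs_lt; lra).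
assert (Hc2 : Rabs (x2 0) < d) by (apply sq_abs_lt; lra).
  assert (Hc3 : Rabs (x3 0) < d) by (apply sq_abs_lt; lra).
  assert (Htp : 0 < t) by lra.
  destruct sol as [Hs [rc1 [rc2 rc3]]] eqn:Esol.
  destruct (rc1 (d - Rabs (x1 0 - m)) ltac:(lra)) as [e1 [He1 Hr1]].
  destruct (rc2 (d - Rabs (x2 0)) ltac:(lra)) as [e2 [He2 Hr2]].
  destruct (rc3 (d - Rabs (x3 0)) ltac:(lra)) as [e3 [He3 Hr3]].
  set (u := Rmin t (Rmin e1 (Rmin e2 e3)) / 2).
  assert (Hmin : 0 < Rmin t (Rmin e1 (Rmin e2 e3))) by (repeat apply Rmin_glb_lt; lra).
  assert (Hu0 : 0 < u) by (unfold u; lra).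
  assert (Hut : u < t) by (unfold u; pose proof (Rmin_l t (Rmin e1 (Rmin e2 e3))); lra).
  assert (Hue1 : u < e1) by (unfold u; pose proof (Rmin_r t (Rmin e1 (Rmin e2 e3))); pose proof (Rmin_l e1 (Rmin e2 e3)); lra).
  assert (Hue2 : u < e2) by (unfold u; pose proof (Rmin_r t (Rmin e1 (Rmin e2 e3))); pose proof (Rmin_r e1 (Rmin e2 e3)); pose proof (Rmin_l e2 e3); lra).
  assert (Hue3 : u < e3) by (unfold u; pose proof (Rmin_r t (Rmin e1 (Rmin e2 e3))); pose proof (Rmin_r e1 (Rmin e2 e3)); pose proof (Rmin_r e2 e3); lra).
  assert (Hu1 : Rabs (x1 u - m) < d).
  { pose proof (Hr1 u ltac:(lra)). replace (x1 u - m) with ((x1 u - x1 0) + (x1 0 - m)) by ring.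
    eapply Rle_lt_trans; [apply Rabs_triang|]. lra. }
  assert (Hu2 : Rabs (x2 u) < d).
  { pose proof (Hr2 u ltac:(lra)). replace (x2 u) with ((x2 u - x2 0) + x2 0) by ring.
    eapply Rle_lt_trans; [apply Rabs_triang|]. lra. }
  assert (Hu3 : Rabs (x3 u) < d).
  { pose proof (Hr3 u ltac:(lra)). replace (x3 u) with ((x3 u - x3 0) + x3 0) by ring.
    eapply Rle_lt_trans; [apply Rabs_triang|]. lra. }
  assert (BND : forall v, u <= v < T -> x2 v ^ 2 <= (L * d)^2 /\ x3 v ^ 2 <= (L * d)^2 /\
     Rabs (x1 v ^ 2 - m ^ 2) <= M * d).
  { intros v Hv. apply (bounds b1 b2 b3 T x1 x2 x3 m d u v); auto; lra. }
  assert (NZ : forall v, u <= v < T -> m^2/2 <= x1 v ^ 2).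
  { intros v Hv. destruct (BND v Hv) as [_ [_ Hb1]].
    pose proof (Rle_abs (-(x1 v ^ 2 - m ^ 2))) as Hq. rewrite Rabs_Ropp in Hq. lra. }
  clear Esol.
  assert (Hsign : 0 < x1 t * m).
  { apply Rabs_def2 in Hu1.
    destruct (Rlt_or_le 0 m) as [Hmp|Hmn].
    - rewrite Rabs_right in Hd2 by lra.
      destruct (Rlt_or_le 0 (x1 t)) as [Hx|Hx]; [nra|exfalso].
      destruct (Req_dec (x1 t) 0) as [Hx0|Hx0].
      + pose proof (NZ t ltac:(lra)) as Hn. rewrite Hx0 in Hn. simpl in Hn. nra.
      + destruct (IVT_interv (fun y => - x1 y) u t) as [z [Hz Hz0]].
        * intros a Ha. apply continuity_pt_opp. apply (x1_cont b1 b2 b3 T x1 x2 x3); [exact sol|lra].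
        * lra.
        * lra.
        * lra.
        * pose proof (NZ z ltac:(lra)) as Hn. assert (Hz1 : x1 z = 0) by lra. rewrite Hz1 in Hn. simpl in Hn. nra.
    - assert (m < 0) by lra. rewrite Rabs_left in Hd2 by lra.
      destruct (Rlt_or_le (x1 t) 0) as [Hx|Hx]; [nra|exfalso].
      destruct (Req_dec (x1 t) 0) as [Hx0|Hx0].
      + pose proof (NZ t ltac:(lra)) as Hn. rewrite Hx0 in Hn. simpl in Hn. nra.
      + destruct (IVT_interv x1 u t) as [z [Hz Hz0]].
        * intros a Ha. apply (x1_cont b1 b2 b3 T x1 x2 x3); [exact sol|lra].
        * lra.
        * lra.
        * lra.
        * pose proof (NZ z ltac:(lra)) as Hn. rewrite Hz0 in Hn. simpl in Hn. nra. }
  destruct (BND t ltac:(lra)) as [B2 [B3 B1]].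
  apply dist_gt; [lra|].
  assert (Hx1 : (x1 t - m)^2 <= eps^2/4).
  { assert (Q : (x1 t - m)^2 * m^2 <= (x1 t ^ 2 - m ^ 2)^2).
    { assert (Hp : m^2 <= (x1 t + m)^2) by (pose proof (pow2_ge_0 (x1 t)); nra).
      replace ((x1 t ^ 2 - m ^ 2)^2) with ((x1 t - m)^2 * (x1 t + m)^2) by ring.
      apply Rmult_le_compat_l; [apply pow2_ge_0|exact Hp]. }
    assert (Q2 : (x1 t ^ 2 - m ^ 2)^2 <= (M*d)^2).
    {       assert (0 <= Rabs (x1 t ^ 2 - m ^ 2)) by apply Rabs_pos.
      rewrite <- (pow2_abs (x1 t ^ 2 - m ^ 2)). nra. }
    assert (Q3 : (M*d)^2 <= (eps * Rabs m / 2)^2) by (assert (0 <= M*d) by nra; nra).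
    assert (Q4 : (eps * Rabs m / 2)^2 = eps^2/4 * m^2).
    { rewrite <- (pow2_abs m). field. }
    apply (Rmult_le_reg_r (m^2)); [exact Hm2|]. nra. }
  assert ((L*d)^2 <= eps^2/4) by (assert (0 <= L*d) by nra; nra).
  nra.
Qed.
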